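(* Let $f$ be a symmetric norm on $\mathbb R^n$, $\mathcal H$ a complex Hilbert space with $\dim\mathcal H\ge n$, and $\|A\|=f(s_1(A),\dots,s_n(A))$ for $A\in\mathcal B(\mathcal H)$. Let $\mathcal S\subseteq\mathbb R^n$ be any compact set of vectors $c=(c_1,\dots,c_n)$ with $c_1\ge\cdots\ge c_n\ge0$ such that $\|A\|=\max\{\sum_{j=1}^n c_js_j(A): c\in\mathcal S\}$ for all $A\in\mathcal B(\mathcal H)$. Then $\|\cdot\|$ is submultiplicative (i.e. $\|AB\|\le\|A\|\|B\|$ for all $A,B\in\mathcal B(\mathcal H)$) if and only if any one of the following holds: (1) $\|A\|\ge s_1(A)$ for all $A\in\mathcal B(\mathcal H)$; (2) there are unit vectors $x,y\in\mathcal H$ such that $\|xy^*\|\ge1$; (3) $f(e_1)\ge1$, equivalently, there is $(c_1,\dots,c_n)\in\mathcal S$ with $c_1\ge1$. Moreover, $\|\cdot\|$ is an algebra norm (submultiplicative with $\|I\|=1$) if and only if it is the operator norm.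
   Context: $\mathcal B(\mathcal H)$ is the algebra of bounded linear operators on $\mathcal H$; $s_k(A)=\inf\{\|A-X\|_{\rm sp}:\operatorname{rank}X<k\}$ is the $k$th singular value, with $\|\cdot\|_{\rm sp}$ the operator norm. A norm $f$ on $\mathbb R^n$ is symmetric if $f(Px)=f(x)$ for all $x$ and every permutation or diagonal orthogonal matrix $P$. $e_1$ is the first standard basis vector of $\mathbb R^n$; $xy^*$ denotes $v\mapsto\langle v,y\rangle x$. (Such a set $\mathcal S$ always exists.) *)

(* Defs.v *)
From HB Require Import structures.
From mathcomp Require Import all_boot all_order all_algebra all_fingroup.
From mathcomp Require Import all_classical all_reals all_analysis.
From mathcomp Require Import complex.
Set Implicit Arguments. Unset Strict Implicit. Unset Printing Implicit Defensive.
Import Order.TTheory GRing.Theory Num.Theory.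
Import numFieldNormedType.Exports.
Local Open Scope ring_scope.
Local Open Scope classical_set_scope.

Section Hilbert.
Variable R : realType.
Variable V : lmodType R[i].
Variable ip : V -> V -> R[i].

Definition hnorm (v : V) : R := Num.sqrt (complex.Re (ip v v)).

Definition is_hilbert : Prop :=
  [/\ (forall (a : R[i]) (u v w : V), ip (a *: u + v) w = a * ip u w + ip v w),
      (forall u v : V, ip v u = conjc (ip u v)),
      (forall v : V, 0 <= complex.Re (ip v v) /\ complex.Im (ip v v) = 0),
      (forall v : V, ip v v = 0 -> v = 0) &
      (forall u : nat -> V,
         (forall e : R, 0 < e -> exists N : nat, forall m k : nat,
             (N <= m)%N -> (N <= k)%N -> hnorm (u m - u k) < e) ->
         exists l : V, forall e : R, 0 < e -> exists N : nat, forall m : nat,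
             (N <= m)%N -> hnorm (u m - l) < e)].

Definition dim_ge (n : nat) : Prop :=
  exists e : 'I_n -> V, forall i j : 'I_n, ip (e i) (e j) = (i == j)%:R.

Definition bounded_linear (A : V -> V) : Prop :=
  (forall (a : R[i]) (u v : V), A (a *: u + v) = a *: A u + A v) /\
  exists M : R, forall v : V, hnorm (A v) <= M * hnorm v.

Definition opnorm (A : V -> V) : R :=
  sup [set hnorm (A v) | v in [set v : V | hnorm v <= 1]].

Definition rank_lt (X : V -> V) (k : nat) : Prop :=
  exists s : seq V, (size s < k)%N /\
    forall v : V, exists c : 'I_(size s) -> R[i],
      X v = \sum_(i < size s) c i *: s`_i.

(* k-th singular value (approximation number), k >= 1 *)
Definition singval (k : nat) (A : V -> V) : R :=
  inf [set opnorm (fun v => A v - X v) |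
        X in [set X : V -> V | bounded_linear X /\ rank_lt X k]].

Definition singvals (n : nat) (A : V -> V) : 'rV[R]_n :=
  \row_(j < n) singval j.+1 A.

Definition rank_one (x y : V) : V -> V := fun v => ip v y *: x.

End Hilbert.

Definition is_norm (R : realType) (n : nat) (f : 'rV[R]_n -> R) : Prop :=
  [/\ (forall x, 0 <= f x),
      (forall x, f x = 0 -> x = 0),
      (forall (a : R) x, f (a *: x) = `|a| * f x) &
      (forall x y, f (x + y) <= f x + f y)].

Definition diag_orthogonal (R : realType) (n : nat) (P : 'M[R]_n) : Prop :=
  is_diag_mx P /\ P *m P^T = 1%:M.

(* f(Px) = f(x) for permutation or diagonal orthogonal P (vectors are rows) *)
Definition symmetric_norm (R : realType) (n : nat) (f : 'rV[R]_n -> R) : Prop :=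
  is_norm f /\
  (forall P : 'M[R]_n, (is_perm_mx P \/ diag_orthogonal P) ->
     forall x : 'rV[R]_n, f (x *m P^T) = f x).

Definition e1 (R : realType) (n : nat) : 'rV[R]_n :=
  \row_(j < n) ((j : nat) == 0%N)%:R.

(* Main.v *)
Require Import Defs.
From HB Require Import structures.
From mathcomp Require Import all_boot all_order all_algebra all_fingroup.
From mathcomp Require Import all_classical all_reals all_analysis.
From mathcomp Require Import complex.
From mathcomp Require Import ring lra.
Set Implicit Arguments. Unset Strict Implicit. Unset Printing Implicit Defensive.
Import Order.TTheory GRing.Theory Num.Theory.
Import numFieldNormedType.Exports.
Local Open Scope ring_scope.
Local Open Scope classical_set_scope.
Section IP.
Variable R : realType.
Variable V : lmodType R[i].
Variable ip : V -> V -> R[i].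
Hypothesis hH : is_hilbert ip.
Local Notation hn := (hnorm ip).
Local Open Scope complex_scope.

Lemma ipDZl a u v w : ip (a *: u + v) w = a * ip u w + ip v w.
Proof. by case: hH => h _ _ _ _; apply: h. Qed.

Lemma ipJ u v : ip v u = conjc (ip u v).
Proof. by case: hH => _ h _ _ _; apply: h. Qed.

Lemma ip0l w : ip 0 w = 0.
Proof.
have := ipDZl 1 0 0 w; rewrite scaler0 addr0 mul1r => h.
by apply: (addrI (ip 0 w)); rewrite addr0 -h.
Qed.

Lemma ipDl u v w : ip (u + v) w = ip u w + ip v w.
Proof. by rewrite -[u in LHS]scale1r ipDZl mul1r. Qed.

Lemma ipZl a u w : ip (a *: u) w = a * ip u w.
Proof. by rewrite -[_ *: _]addr0 ipDZl ip0l addr0. Qed.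

Lemma ipNl u w : ip (- u) w = - ip u w.
Proof. by rewrite -scaleN1r ipZl mulN1r. Qed.

Lemma ipBl u v w : ip (u - v) w = ip u w - ip v w.
Proof. by rewrite ipDl ipNl. Qed.

Lemma ipDr u v w : ip w (u + v) = ip w u + ip w v.
Proof. by rewrite ipJ ipDl rmorphD /= -!ipJ. Qed.

Lemma ipZr a u w : ip w (a *: u) = conjc a * ip w u.
Proof. by rewrite ipJ ipZl rmorphM /= -!ipJ. Qed.

Lemma ip0r w : ip w 0 = 0.
Proof. by rewrite ipJ ip0l rmorph0. Qed.

Lemma ipNr u w : ip w (- u) = - ip w u.
Proof. by rewrite ipJ ipNl rmorphN /= -!ipJ. Qed.

Lemma ipBr u v w : ip w (u - v) = ip w u - ip w v.
Proof. by rewrite ipDr ipNr. Qed.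

Lemma ip_suml (I : finType) (F : I -> V) w :
  ip (\sum_i F i) w = \sum_i ip (F i) w.
Proof.
apply: (big_rec2 (fun x y => ip y w = x)); first by rewrite ip0l.
by move=> i x y _ <-; rewrite ipDl.
Qed.

Lemma ip_sumr (I : finType) (F : I -> V) w :
  ip w (\sum_i F i) = \sum_i ip w (F i).
Proof.
apply: (big_rec2 (fun x y => ip w y = x)); first by rewrite ip0r.
by move=> i x y _ <-; rewrite ipDr.
Qed.

Lemma hn_ge0 v : 0 <= hn v.
Proof. exact: sqrtr_ge0. Qed.

Lemma ipvv v : ip v v = ((hn v) ^+ 2)%:C.
Proof.
case: hH => _ _ h _ _; have [h1 h2] := h v.
rewrite /hnorm sqr_sqrtr //.
by move: h2; case: (ip v v) => a b /= ->.
Qed.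

Lemma ipvvC v : ip v v = (hn v)%:C ^+ 2.
Proof. by rewrite ipvv rmorphXn. Qed.

Lemma hn0 v : hn v = 0 -> v = 0.
Proof.
move=> h; case: hH => _ _ _ h0 _; apply: h0.
by rewrite ipvv h expr0n.
Qed.

Lemma hnC_ge0 v : 0 <= (hn v)%:C.
Proof. by rewrite lecR hn_ge0. Qed.

Lemma hnZ a v : (hn (a *: v))%:C = `|a| * (hn v)%:C.
Proof.
apply: (pexpIrn (n:=2)) => //; rewrite ?nnegrE ?hnC_ge0 ?mulr_ge0 ?hnC_ge0 //.
rewrite -ipvvC ipZl ipZr exprMn sqr_normc -ipvvC mulrA.
by [].
Qed.

Lemma hnZr (r : R) v : hn (r%:C *: v) = `|r| * hn v.
Proof.
have := hnZ r%:C v; rewrite normc_def /= expr0n addr0 sqrtr_sqr.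
by rewrite -rmorphM => -[].
Qed.

Lemma CS_unit v y : hn y = 1 -> `|ip v y| <= (hn v)%:C.
Proof.
move=> hy.
have yy : ip y y = 1 by rewrite ipvv hy expr1n.
set a := ip v y.
have h : 0 <= ip (v - a *: y) (v - a *: y) by rewrite ipvvC exprn_ge0 // hnC_ge0.
rewrite ipBl !ipBr !ipZl !ipZr yy [ip y v]ipJ -/a in h.
rewrite -(@ler_pXn2r _ 2%N isT) ?nnegrE ?normr_ge0 ?hnC_ge0 // sqr_normc -ipvvC.
rewrite -subr_ge0; move: h.
move=> h; apply: le_trans h _; rewrite le_eqVlt; apply/orP; left; apply/eqP; ring.
Qed.

End IP.
Section Ops.
Variable R : realType.
Variable V : lmodType R[i].
Variable ip : V -> V -> R[i].
Hypothesis hH : is_hilbert ip.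
Local Notation hn := (hnorm ip).
Local Open Scope complex_scope.

Lemma hn_0 : hn 0 = 0.
Proof. by rewrite /hnorm ip0l //= sqrtr0. Qed.

Lemma CS u w : `|ip u w| <= (hn u * hn w)%:C.
Proof.
have [hw0|hw0] := eqVneq (hn w) 0.
  by rewrite (hn0 hH hw0) ip0r // normr0 hn_0 mulr0.
set r := (hn w)^-1.
have r0 : 0 <= r by rewrite invr_ge0 hn_ge0.
have hw1 : hn (r%:C *: w) = 1.
  by rewrite hnZr // ger0_norm // mulVf.
have := CS_unit hH u hw1; rewrite ipZr // conjc_real normrM.
rewrite (ger0_norm (x := r%:C)); last by rewrite lecR.
move=> h.
have -> : `|ip u w| = (hn w)%:C * (r%:C * `|ip u w|).
  by rewrite mulrA -rmorphM mulfV // mul1r.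
rewrite mulrC rmorphM; apply: ler_wpM2r => //; exact: hnC_ge0.
Qed.

Lemma hnD u w : hn (u + w) <= hn u + hn w.
Proof.
rewrite -lecR.
rewrite -(@ler_pXn2r _ 2%N isT) ?nnegrE ?hnC_ge0 ?lecR ?addr_ge0 ?hn_ge0 //.
rewrite -(ipvvC hH (u + w)) (ipDl hH) !(ipDr hH) [ip w u](ipJ hH).
have e : ip u w + conjc (ip u w) = 2%:R * (complex.Re (ip u w))%:C by rewrite addcJ.
have hre : complex.Re (ip u w) <= hn u * hn w.
  rewrite -lecR; apply: le_trans (CS u w); apply: le_trans (normc_ge_Re _).
  by rewrite lecR ler_norm.
have -> : ip u u + ip u w + (conjc (ip u w) + ip w w) =
   ip u u + ip w w + (ip u w + conjc (ip u w)) by ring.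
rewrite e (ipvv hH u) (ipvv hH w) -rmorphXn lecE /=.
simpc; rewrite sqrrD; lra.
Qed.

Definition lin (A : V -> V) := forall (a : R[i]) (u v : V), A (a *: u + v) = a *: A u + A v.

Lemma lin0 A : lin A -> A 0 = 0.
Proof.
move=> hA; have := hA 1 0 0; rewrite scaler0 addr0 scale1r => h.
by apply: (addrI (A 0)); rewrite addr0 -h.
Qed.

Lemma linD A : lin A -> forall u v, A (u + v) = A u + A v.
Proof. by move=> hA u v; rewrite -[u in LHS]scale1r hA scale1r. Qed.

Lemma linZ A : lin A -> forall a u, A (a *: u) = a *: A u.
Proof. by move=> hA a u; rewrite -[_ *: _]addr0 hA lin0 // addr0. Qed.

Lemma linB A : lin A -> forall u v, A (u - v) = A u - A v.
Proof. by move=> hA u v; rewrite linD // -scaleN1r linZ // scaleN1r. Qed.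

Lemma lin_sum A : lin A -> forall (I : finType) (F : I -> V),
  A (\sum_i F i) = \sum_i A (F i).
Proof.
move=> hA I F; apply: (big_rec2 (fun x y => A y = x)); first exact: lin0.
by move=> i x y _ <-; rewrite linD.
Qed.

Definition opset (A : V -> V) := [set hn (A v) | v in [set v : V | hn v <= 1]].

Lemma opset_n0 A : opset A !=set0.
Proof. by exists (hn (A 0)), 0 => //=; rewrite hn_0 ler01. Qed.

Lemma op_ge0 A : 0 <= opnorm ip A.
Proof.
rewrite /opnorm -/(opset A).
have [hs|hs] := pselect (has_sup (opset A)); last by rewrite sup_out.
apply: le_trans (hn_ge0 ip (A 0)) _.
by apply: sup_upper_bound => //; exists 0 => //=; rewrite hn_0 ler01.
Qed.

Lemma op_le A c : (forall v, hn v <= 1 -> hn (A v) <= c) -> opnorm ip A <= c.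
Proof.
move=> h; apply: ge_sup; first exact: opset_n0.
by move=> x [v hv <-]; apply: h.
Qed.

Lemma bl_hassup A : bounded_linear ip A -> has_sup (opset A).
Proof.
case=> _ [M hM]; split; first exact: opset_n0.
exists `|M| => x [v hv <-] /=.
apply: le_trans (hM v) _; apply: le_trans (ler_norm _) _.
by rewrite normrM (ger0_norm (hn_ge0 _ _)) ler_piMr //.
Qed.

Lemma op_ge A v : bounded_linear ip A -> hn v <= 1 -> hn (A v) <= opnorm ip A.
Proof.
move=> hA hv; apply: sup_upper_bound; first exact: bl_hassup.
by exists v.
Qed.

Lemma op_bound A v : bounded_linear ip A -> hn (A v) <= opnorm ip A * hn v.
Proof.
move=> hA; have [hv0|hv0] := eqVneq (hn v) 0.
  by rewrite (hn0 hH hv0) lin0 ?hn_0 ?hv0 ?mulr0 //; case: hA.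
set r := (hn v)^-1.
have r0 : 0 <= r by rewrite invr_ge0 hn_ge0.
have hv1 : hn (r%:C *: v) <= 1.
  by rewrite hnZr // ger0_norm // mulVf.
have := op_ge hA hv1; rewrite linZ; last by case: hA.
rewrite hnZr // ger0_norm // => h.
have -> : hn (A v) = hn v * (r * hn (A v)) by rewrite mulrA mulfV // mul1r.
by rewrite mulrC; apply: ler_wpM2r => //; exact: hn_ge0.
Qed.

Lemma bl_comp A B : bounded_linear ip A -> bounded_linear ip B ->
  bounded_linear ip (A \o B) /\ opnorm ip (A \o B) <= opnorm ip A * opnorm ip B.
Proof.
move=> hA hB.
have hb : forall v, hn ((A \o B) v) <= (opnorm ip A * opnorm ip B) * hn v.
  move=> v /=; apply: le_trans (op_bound _ hA) _.
  rewrite -mulrA; apply: ler_wpM2l; first exact: op_ge0.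
  exact: op_bound.
split.
  split; last by exists (opnorm ip A * opnorm ip B).
  by move=> a u v /=; case: hA => lA _; case: hB => lB _; rewrite lB lA.
apply: op_le => v hv; apply: le_trans (hb v) _.
apply: ler_piMr => //; apply: mulr_ge0; exact: op_ge0.
Qed.

Lemma bl_sub A B : bounded_linear ip A -> bounded_linear ip B ->
  bounded_linear ip (fun v => A v - B v).
Proof.
move=> [lA [MA hA]] [lB [MB hB]]; split.
  by move=> a u v; rewrite lA lB scalerBr; rewrite addrACA opprD.
exists (MA + MB) => v; rewrite mulrDl.
apply: le_trans (hnD _ _) _.
have -> : hn (- B v) = hn (B v) by rewrite /hnorm (ipNl hH) (ipNr hH) opprK.
exact: lerD.
Qed.

End Ops.
Section SV.
Variable R : realType.
Variable V : lmodType R[i].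
Variable ip : V -> V -> R[i].
Hypothesis hH : is_hilbert ip.
Local Notation hn := (hnorm ip).
Local Notation bl := (bounded_linear ip).
Local Open Scope complex_scope.

Definition svset k (A : V -> V) :=
  [set opnorm ip (fun v => A v - X v) | X in [set X : V -> V | bl X /\ rank_lt X k]].

Lemma singvalE k A : singval ip k A = inf (svset k A).
Proof. by []. Qed.

Lemma rank_zero k : (0 < k)%N -> rank_lt (fun _ : V => 0 : V) k.
Proof. by move=> hk; exists [::]; split => // v; exists (fun _ => 0); rewrite big_ord0. Qed.

Lemma bl_zero : bl (fun _ => 0).
Proof.
split; first by move=> a u v; rewrite scaler0 addr0.
by exists 0 => v /=; rewrite mul0r (hn_0 hH).
Qed.

Lemma rank_mono (X : V -> V) k l : (k <= l)%N -> rank_lt X k -> rank_lt X l.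
Proof. by move=> hkl [s [hs hc]]; exists s; split => //; apply: leq_trans hkl. Qed.

Lemma svset_n0 k A : (0 < k)%N -> svset k A !=set0.
Proof.
move=> hk; exists (opnorm ip (fun v => A v - 0)), (fun _ => 0) => //.
by split; [exact: bl_zero | exact: rank_zero].
Qed.

Lemma svset_lb k A : lbound (svset k A) 0.
Proof. by move=> x [X _ <-]; exact: (op_ge0 hH). Qed.

Lemma sv_le A k X : bl X -> rank_lt X k ->
  singval ip k A <= opnorm ip (fun v => A v - X v).
Proof.
move=> hX hr; rewrite singvalE; apply: ge_inf; first by exists 0; exact: svset_lb.
by exists X.
Qed.

Lemma sv_ge A k c : (0 < k)%N ->
  (forall X, bl X -> rank_lt X k -> c <= opnorm ip (fun v => A v - X v)) ->
  c <= singval ip k A.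
Proof.
move=> hk h; rewrite singvalE; apply: lb_le_inf; first exact: svset_n0.
by move=> x [X [hX hr] <-]; apply: h.
Qed.

Lemma sv_ge0 A k : (0 < k)%N -> 0 <= singval ip k A.
Proof. by move=> hk; apply: sv_ge => // X _ _; exact: (op_ge0 hH). Qed.

Lemma rank1_zero (X : V -> V) : rank_lt X 1 -> forall v, X v = 0.
Proof.
case=> s [hs hc] v; case: (hc v) => c ->; apply: big1 => -[i hi] _; exfalso.
move: hs; rewrite ltnS leqn0 => /eqP e.
by rewrite e in hi.
Qed.

Lemma sub0_fun (A : V -> V) : (fun v => A v - 0) = A.
Proof. by apply: funext => v; rewrite subr0. Qed.

Lemma sv1 A : bl A -> singval ip 1 A = opnorm ip A.
Proof.
move=> hA; apply/eqP; rewrite eq_le; apply/andP; split.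
  by rewrite -{2}(sub0_fun A); apply: sv_le; [exact: bl_zero | exact: rank_zero].
apply: sv_ge => // X hX hr.
have -> : (fun v => A v - X v) = A by apply: funext => v; rewrite (rank1_zero hr) subr0.
by [].
Qed.

Lemma sv_le1 A k : bl A -> (0 < k)%N -> singval ip k A <= singval ip 1 A.
Proof.
move=> hA hk; rewrite sv1 // -{2}(sub0_fun A).
by apply: sv_le; [exact: bl_zero | exact: rank_zero].
Qed.

Lemma rank_comp (A X : V -> V) k : lin A -> rank_lt X k -> rank_lt (A \o X) k.
Proof.
move=> hA [s [hs hc]]; exists (map A s); rewrite size_map; split => // v.
case: (hc v) => c hv; exists c; rewrite /= hv lin_sum //; apply: eq_bigr => i _.
by rewrite linZ // (nth_map 0).
Qed.

Lemma sv_comp A B k : bl A -> bl B -> (0 < k)%N ->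
  singval ip k (A \o B) <= opnorm ip A * singval ip k B.
Proof.
move=> hA hB hk.
have h : forall X, bl X -> rank_lt X k ->
    singval ip k (A \o B) <= opnorm ip A * opnorm ip (fun v => B v - X v).
  move=> X hX hr.
  have [blY _] := bl_comp hH hA hX.
  apply: le_trans (sv_le _ blY (rank_comp _ hr)) _; first by case: hA.
  have -> : (fun v => (A \o B) v - (A \o X) v) = A \o (fun v => B v - X v).
    by apply: funext => v /=; rewrite linB //; case: hA.
  by have [_ ->] := bl_comp hH hA (bl_sub hH hB hX).
have [c0|c0] := eqVneq (opnorm ip A) 0.
  have := h _ bl_zero (rank_zero hk); rewrite c0 !mul0r //.
have cp : 0 < opnorm ip A by rewrite lt_def c0 (op_ge0 hH).
rewrite -ler_pdivrMl //; apply: sv_ge => // X hX hr.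
by rewrite ler_pdivrMl //; apply: h.
Qed.

Lemma ro_lin x y : lin (rank_one ip x y).
Proof. by move=> a u v; rewrite /rank_one (ipDZl hH) scalerDl scalerA. Qed.

Lemma ro_bl x y : hn x = 1 -> hn y = 1 -> bl (rank_one ip x y).
Proof.
move=> hx hy; split; first exact: ro_lin.
exists 1 => v; rewrite mul1r -lecR /rank_one (hnZ hH) hx mulr1.
exact: (CS_unit hH).
Qed.

Lemma ro_op x y : hn x = 1 -> hn y = 1 -> opnorm ip (rank_one ip x y) = 1.
Proof.
move=> hx hy; apply/eqP; rewrite eq_le; apply/andP; split.
  apply: (op_le hH) => v hv; apply: le_trans hv.
  by have [_ [M hM]] := ro_bl hx hy; rewrite -lecR /rank_one (hnZ hH) hx mulr1 (CS_unit hH).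
have <- : hn (rank_one ip x y y) = 1 by rewrite /rank_one (ipvv hH) hy expr1n scale1r.
by apply: (op_ge hH); [exact: ro_bl | rewrite hy].
Qed.

Lemma ro_rank x y : rank_lt (rank_one ip x y) 2.
Proof.
exists [:: x]; split => // v; exists (fun _ => ip v y).
by rewrite big_ord1.
Qed.

Lemma ro_sv x y k : hn x = 1 -> hn y = 1 -> (2 <= k)%N -> singval ip k (rank_one ip x y) = 0.
Proof.
move=> hx hy hk; apply/eqP; rewrite eq_le; apply/andP; split.
  apply: le_trans (sv_le _ (ro_bl hx hy) (rank_mono hk (ro_rank x y))) _.
  by apply: (op_le hH) => v _; rewrite subrr (hn_0 hH).
by apply: sv_ge0; apply: leq_trans hk.
Qed.

Lemma ro_svals n x y : hn x = 1 -> hn y = 1 ->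
  singvals ip n (rank_one ip x y) = e1 R n.
Proof.
move=> hx hy; apply/rowP => j; rewrite !mxE.
case: j => -[|j] hj /=.
  by rewrite sv1 ?ro_op //; exact: ro_bl.
by rewrite ro_sv.
Qed.

End SV.
Section SVid.
Variable R : realType.
Variable V : lmodType R[i].
Variable ip : V -> V -> R[i].
Hypothesis hH : is_hilbert ip.
Local Notation hn := (hnorm ip).
Local Notation bl := (bounded_linear ip).
Local Open Scope complex_scope.

Lemma bl_id : bl id.
Proof. by split => //; exists 1 => v; rewrite mul1r. Qed.

Lemma sv_id n j : dim_ge ip n -> (0 < j)%N -> (j <= n)%N -> 1 <= singval ip j id.
Proof.
move=> [e he] hj hjn; apply: sv_ge => // X hX [s [hs hc]].
pose E (k : 'I_j) := e (widen_ord hjn k).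
have hE : forall k l, ip (E k) (E l) = (k == l)%:R.
  by move=> k l; rewrite /E he; congr (_%:R); apply/eqP/eqP => [/(congr1 val)/val_inj|->].
pose M := \matrix_(k < j, i < size s) ip (E k) (s`_i).
have : kermx M != 0.
  rewrite -mxrank_eq0 mxrank_ker subn_eq0 -ltnNge.
  by apply: leq_ltn_trans (rank_leq_col M) hs.
case/rowV0Pn => a /sub_kermxP ha anz.
pose v := \sum_k a 0 k *: E k.
have vs : forall i : 'I_(size s), ip v (s`_i) = 0.
  move=> i; have := congr1 (fun B : 'M[R[i]]_(1, size s) => B 0 i) ha; rewrite !mxE => <-.
  rewrite (ip_suml hH); apply: eq_bigr => k _; rewrite (ipZl hH) mxE //.
have vE : forall l, ip v (E l) = a 0 l.
  move=> l; rewrite (ip_suml hH) (bigD1 l) //= big1 ?addr0.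
    by rewrite (ipZl hH) hE eqxx mulr1.
  by move=> k hk; rewrite (ipZl hH) hE (negbTE hk) mulr0.
have hv0 : hn v != 0.
  apply/negP => /eqP /(hn0 hH) v0; move/negP: anz; apply; apply/eqP/rowP => l.
  by rewrite mxE -vE v0 (ip0l hH).
have vX : forall w, ip v (X w) = 0.
  move=> w; case: (hc w) => c ->; rewrite (ip_sumr hH) big1 // => i _.
  by rewrite (ipZr hH) vs mulr0.
have hvX : hn v <= hn (v - X v).
  rewrite -lecR -(@ler_pXn2r _ 2%N isT) ?nnegrE ?hnC_ge0 //.
  rewrite -!(ipvvC hH) (ipBl hH) !(ipBr hH) vX [ip (X v) v](ipJ hH) vX conjc0.
  by rewrite !subr0 sub0r opprK lerDl (ipvvC hH) exprn_ge0 ?hnC_ge0.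
set r := (hn v)^-1.
have r0 : 0 <= r by rewrite invr_ge0 hn_ge0.
have hw1 : hn (r%:C *: v) <= 1 by rewrite (hnZr hH) ger0_norm // mulVf.
apply: le_trans (op_ge hH (bl_sub hH bl_id hX) hw1).
case: hX => lX _; rewrite /= (linZ lX) -scalerBr (hnZr hH) ger0_norm //.
rewrite -(mulVf hv0); apply: ler_wpM2l => //.
Qed.

End SVid.
Unset Implicit Arguments.

Theorem proposition2p4 (R : realType) (n : nat) (hn : (0 < n)%N)
  (f : 'rV[R]_n -> R) (hf : symmetric_norm f)
  (V : lmodType R[i]) (ip : V -> V -> R[i])
  (hH : is_hilbert ip) (hdim : dim_ge ip n)
  (S : set 'rV[R]_n) (hScpt : compact S)
  (hSord : forall c : 'rV[R]_n, S c ->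
     (forall i j : 'I_n, (i <= j)%N -> c ord0 j <= c ord0 i) /\
     (forall i : 'I_n, 0 <= c ord0 i))
  (hSmax : forall A : V -> V, bounded_linear ip A ->
     (exists2 c : 'rV[R]_n, S c &
        f (singvals ip n A) = \sum_(j < n) c ord0 j * singval ip j.+1 A) /\
     (forall c : 'rV[R]_n, S c ->
        \sum_(j < n) c ord0 j * singval ip j.+1 A <= f (singvals ip n A))) :
  let nrm := fun A : V -> V => f (singvals ip n A) in
  let submult := forall A B : V -> V, bounded_linear ip A -> bounded_linear ip B ->
                   nrm (A \o B) <= nrm A * nrm B in
  [/\ submult <-> (forall A : V -> V, bounded_linear ip A -> singval ip 1 A <= nrm A),
      submult <-> (exists x y : V, [/\ hnorm ip x = 1, hnorm ip y = 1 &
                                        1 <= nrm (rank_one ip x y)]),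
      submult <-> 1 <= f (e1 R n),
      (1 <= f (e1 R n) <-> exists2 c : 'rV[R]_n, S c & 1 <= c ord0 (Ordinal hn)) &
      ((submult /\ nrm id = 1) <->
         (forall A : V -> V, bounded_linear ip A -> nrm A = opnorm ip A))].
Proof.
move=> nrm submult.
set i0 := Ordinal hn.
have [e he] := hdim.
set x0 := e i0.
have hx0 : hnorm ip x0 = 1.
  by rewrite /hnorm /x0 he eqxx /= sqrtr1.
case: hf => -[f0 fdef _ _] _.
set F := f (e1 R n).
have F0 : 0 < F.
  rewrite lt_def f0 andbT; apply/negP => /eqP /fdef /rowP /(_ i0).
  by rewrite !mxE /= => /eqP; rewrite oner_eq0.
set P := rank_one ip x0 x0.
have blP : bounded_linear ip P by exact: ro_bl.
have nrmP : forall x y, hnorm ip x = 1 -> hnorm ip y = 1 -> nrm (rank_one ip x y) = F.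
  by move=> x y hx hy; rewrite /nrm ro_svals.
have sumP : forall c : 'rV[R]_n, \sum_(j < n) c ord0 j * singval ip j.+1 P = c ord0 i0.
  move=> c; rewrite (bigD1 i0) //= big1 ?addr0.
    by rewrite sv1 // ro_op // mulr1.
  move=> j hj; rewrite ro_sv ?mulr0 //.
  by case: j hj => -[|j] hj //= _.
have part4 : 1 <= F <-> exists2 c : 'rV[R]_n, S c & 1 <= c ord0 i0.
  split.
    move=> h; have [[c hc hcF] _] := hSmax P blP; exists c => //.
    by rewrite -sumP -hcF -/(nrm P) nrmP.
  move=> [c hc h1]; apply: le_trans h1 _.
  have [_ h] := hSmax P blP; have := h c hc; rewrite sumP -/(nrm P) nrmP //.
have LB : 1 <= F -> forall A, bounded_linear ip A -> singval ip 1 A <= nrm A.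
  move=> /part4 [c hc h1] A hA; have [_ h] := hSmax A hA.
  apply: le_trans (h c hc); rewrite (bigD1 i0) //=.
  apply: (@le_trans _ _ (c ord0 i0 * singval ip 1 A)).
    by apply: ler_peMl => //; exact: sv_ge0.
  rewrite lerDl; apply: sumr_ge0 => j _; apply: mulr_ge0; first by case: (hSord c hc).
  exact: sv_ge0.
have nrm_ge0 : forall A, 0 <= nrm A by move=> A; exact: f0.
have part3 : submult <-> 1 <= F.
  split.
    move=> hs; have := hs P P blP blP.
    have -> : P \o P = P.
      apply: funext => v; rewrite /P /rank_one /= (ipZl hH) (ipvv hH) hx0 expr1n.
      by rewrite mulr1.
    by rewrite /nrm -/(nrm P) nrmP // ler_pMr.
  move=> hF A B hA hB.
  have [blAB _] := bl_comp hH hA hB.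
  have [[c hc hcE] _] := hSmax _ blAB.
  change (nrm (A \o B)) with (f (singvals ip n (A \o B))); rewrite hcE.
  have [hcd hc0] := hSord c hc.
  apply: (@le_trans _ _ (opnorm ip A * nrm B)); last first.
    by apply: ler_wpM2r => //; rewrite -sv1 //; exact: LB.
  apply: (@le_trans _ _ (opnorm ip A * \sum_(j < n) c ord0 j * singval ip j.+1 B)).
    rewrite mulr_sumr; apply: ler_sum => j _.
    rewrite mulrCA; apply: ler_wpM2l => //; exact: sv_comp.
  apply: ler_wpM2l; first exact: op_ge0.
  by have [_ h] := hSmax B hB; exact: h.
split.
- split.
    by move=> /part3 hF; exact: LB.
  move=> h; apply/part3; have := h P blP.
  by rewrite sv1 // ro_op // -/(nrm P) nrmP.
- split.
    by move=> /part3 hF; exists x0, x0; split => //; rewrite nrmP.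
  by move=> [x [y [hx hy h]]]; apply/part3; rewrite -(nrmP x y).
- exact: part3.
- exact: part4.
split.
  move=> [/part3 hF hid] A hA; apply/eqP; rewrite eq_le; apply/andP; split; last first.
    by rewrite -sv1 //; exact: LB.
  have [[c hc hcE] _] := hSmax A hA.
  change (nrm A) with (f (singvals ip n A)); rewrite hcE.
  have [hcd hc0] := hSord c hc.
  have [_ hI] := hSmax id (@bl_id _ _ ip).
  have := hI c hc; rewrite -/(nrm id) hid => hsum.
  rewrite -sv1 //.
  apply: (@le_trans _ _ (singval ip 1 A * \sum_(j < n) c ord0 j * singval ip j.+1 id)); last first.
    by rewrite -{2}[singval ip 1 A]mulr1; apply: ler_wpM2l => //; exact: sv_ge0.
  rewrite mulr_sumr; apply: ler_sum => j _.
  rewrite mulrCA; apply: ler_wpM2l => //.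
  apply: (le_trans (sv_le1 hH hA (ltn0Sn j))).
  apply: ler_peMr; first exact: sv_ge0.
  exact: (sv_id hH hdim).
move=> h; split.
  move=> A B hA hB; have [blAB hop] := bl_comp hH hA hB.
  by rewrite !h.
rewrite h; last exact: (@bl_id _ _ ip).
apply/eqP; rewrite eq_le; apply/andP; split.
  by apply: (op_le hH) => v.
by rewrite -{1}hx0; apply: (op_ge hH); [exact: (@bl_id _ _ ip) | rewrite hx0].
Qed.
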